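(* Every finite twin-free interval order $P=(X,\prec)$ has a closed interval representation $\{I(x)=[L(x),R(x)]:x\in X\}$ satisfying the following peeking property: for each pair $u,v\in X$ with $I(u)\subsetneq I(v)$, there exist $x,y\in X$ such that $x$ peeks into $vu$ from the left and $y$ peeks into $vu$ from the right.
   Context: Posets are strict (irreflexive) partial orders. Two points are twins if they have exactly the same comparabilities; $P$ is twin-free if no two distinct points are twins. $P$ is an interval order if there is an assignment of a closed real interval $I(x)=[L(x),R(x)]$ to each $x\in X$ (a closed interval representation) such that $x\prec y$ if and only if $R(x)<L(y)$. Given a representation and $u,v,x\in X$ with $I(u)\subsetneq I(v)$: $x$ peeks into $vu$ if $I(x)$ intersects $I(v)$ but not $I(u)$; it peeks into $vu$ from the left if moreover $R(x)\le L(u)$, and from the right if moreover $R(u)\le L(x)$. *)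

(* Defs.v *)
From mathcomp Require Import all_boot.
From Stdlib Require Import Reals.
Set Implicit Arguments. Unset Strict Implicit. Unset Printing Implicit Defensive.
Open Scope R_scope.

Definition strict_poset (X : Type) (lt : X -> X -> Prop) : Prop :=
  (forall x, ~ lt x x) /\ (forall x y z, lt x y -> lt y z -> lt x z).

Definition twins (X : Type) (lt : X -> X -> Prop) (x y : X) : Prop :=
  forall z, (lt x z <-> lt y z) /\ (lt z x <-> lt z y).

Definition twin_free (X : Type) (lt : X -> X -> Prop) : Prop :=
  forall x y, twins lt x y -> x = y.

Definition interval_rep (X : Type) (lt : X -> X -> Prop) (L Rt : X -> R) : Prop :=
  (forall x, L x <= Rt x) /\ (forall x y, lt x y <-> Rt x < L y).

Definition interval_order (X : Type) (lt : X -> X -> Prop) : Prop :=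
  exists L Rt : X -> R, interval_rep lt L Rt.

Definition in_I (X : Type) (L Rt : X -> R) (x : X) (t : R) : Prop :=
  L x <= t <= Rt x.

Definition strict_sub (X : Type) (L Rt : X -> R) (u v : X) : Prop :=
  (forall t, in_I L Rt u t -> in_I L Rt v t) /\ (exists t, in_I L Rt v t /\ ~ in_I L Rt u t).

Definition intersects (X : Type) (L Rt : X -> R) (x v : X) : Prop :=
  exists t, in_I L Rt x t /\ in_I L Rt v t.

Definition peeks (X : Type) (L Rt : X -> R) (x v u : X) : Prop :=
  intersects L Rt x v /\ ~ intersects L Rt x u.

Definition peeks_left (X : Type) (L Rt : X -> R) (x v u : X) : Prop :=
  peeks L Rt x v u /\ Rt x <= L u.

Definition peeks_right (X : Type) (L Rt : X -> R) (x v u : X) : Prop :=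
  peeks L Rt x v u /\ Rt u <= L x.

(* Main.v *)
Require Import Defs.
From mathcomp Require Import all_boot.
From Stdlib Require Import Reals.
From mathcomp Require Import zify.
From Stdlib Require Import Lia Lra ClassicalEpsilon Classical.
Local Open Scope nat_scope.
Set Implicit Arguments. Unset Strict Implicit.

Lemma arithA (M a b c d : nat) : (b < M -> d < M -> 2*M*a + b <= 2*M*c + d -> a <= c /\ (a = c -> b <= d))%N.
Proof. move=> hb hd h; split; last by move=> e; subst; lia. nia. Qed.
Lemma arith1 (M a b c d : nat) : (b < M -> c < M -> (a < d <-> 2*M*a + M + b < 2*M*d + c))%N.
Proof. move=> hb hc; split => h; nia. Qed.
Lemma arith2 (M a b : nat) : (b < M -> a <= b -> 2*M*a + b <= 2*M*b + M + a)%N.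
Proof. move=> *; nia. Qed.

Definition ltb (X : Type) (lt : X -> X -> Prop) x y : bool :=
  if excluded_middle_informative (lt x y) then true else false.

Lemma ltbP (X : Type) (lt : X -> X -> Prop) x y : reflect (lt x y) (ltb lt x y).
Proof. rewrite /ltb; case: excluded_middle_informative => h; by constructor. Qed.

Definition Dn (X : finType) (lt : X -> X -> Prop) y : nat := #|[pred z | ltb lt z y]|.
Definition R0 (X : finType) (lt : X -> X -> Prop) x : nat :=
  (\max_(w | ~~ ltb lt x w) Dn lt w)%N.

Lemma chain (X : Type) (lt : X -> X -> Prop) L1 R1 : interval_rep lt L1 R1 ->
  forall w y, (forall z, lt z w -> lt z y) \/ (forall z, lt z y -> lt z w).
Proof.
move=> [_ H] w y; destruct (Rle_dec (L1 w) (L1 y)) as [h|h].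
- left => z /H hz; apply/H; lra.
- right => z /H hz; apply/H; lra.
Qed.

Lemma sub_card (X : finType) (lt : X -> X -> Prop) w y :
  (forall z, lt z w -> lt z y) -> (Dn lt w <= Dn lt y)%N.
Proof.
move=> h; apply: subset_leq_card; apply/subsetP => z; rewrite !inE.
by move/ltbP/h/ltbP.
Qed.

Lemma rep0 (X : finType) (lt : X -> X -> Prop) L1 R1 : interval_rep lt L1 R1 ->
  forall x y, lt x y <-> (R0 lt x < Dn lt y)%N.
Proof.
move=> hr x y; split.
- move=> hxy.
  have hw : forall w, ~~ ltb lt x w -> (Dn lt w < Dn lt y)%N.
    move=> w /ltbP hw.
    case: (chain hr w y) => h.
    + apply: proper_card; apply/properP; split.
        by apply/subsetP => z; rewrite !inE => /ltbP/h/ltbP.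
      exists x; rewrite !inE; apply/ltbP => //.
    + by exfalso; apply: hw; apply: h.
  have pos : (0 < Dn lt y)%N.
    apply/card_gt0P; exists x; rewrite !inE; exact/ltbP.
  have : (R0 lt x <= (Dn lt y).-1)%N.
    apply/bigmax_leqP => w /hw; lia.
  lia.
- move=> h; apply: NNPP => hn.
  have : (Dn lt y <= R0 lt x)%N.
    apply: (@leq_bigmax_cond _ (fun w => ~~ ltb lt x w) (fun w => Dn lt w) y); exact/ltbP.
  lia.
Qed.

Lemma L0R0 (X : finType) (lt : X -> X -> Prop) : strict_poset lt ->
  forall x, (Dn lt x <= R0 lt x)%N.
Proof.
move=> [irr _] x; apply: (@leq_bigmax_cond _ (fun w => ~~ ltb lt x w) (fun w => Dn lt w) x); apply/ltbP; apply: irr.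
Qed.

Lemma R0bound (X : finType) (lt : X -> X -> Prop) x : (R0 lt x < #|X|.+1)%N.
Proof.
have : (R0 lt x <= #|X|)%N.
  apply/bigmax_leqP => w _; exact: max_card.
lia.
Qed.

Lemma D0bound (X : finType) (lt : X -> X -> Prop) x : (Dn lt x < #|X|.+1)%N.
Proof. by rewrite ltnS /Dn max_card. Qed.

Lemma left_ex (X : finType) (lt : X -> X -> Prop) u v :
  (Dn lt v < Dn lt u)%N -> exists x, lt x u /\ ~ lt x v.
Proof.
move=> h; apply: NNPP => hn.
have : (Dn lt u <= Dn lt v)%N.
  apply: sub_card => z hz; apply: NNPP => hzv; apply: hn; by exists z.
lia.
Qed.

Lemma right_ex (X : finType) (lt : X -> X -> Prop) u v :
  (R0 lt u < R0 lt v)%N -> exists w, lt u w /\ ~ lt v w.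
Proof.
move=> h; apply: NNPP => hn.
have : (R0 lt v <= R0 lt u)%N.
  apply/bigmax_leqP => w /ltbP hw.
  apply: (@leq_bigmax_cond _ (fun w => ~~ ltb lt u w) (fun w => Dn lt w) w); apply/ltbP => huw.
  by apply: hn; exists w.
lia.
Qed.

Lemma inter_of (X : Type) (lt : X -> X -> Prop) L Rt x v : interval_rep lt L Rt ->
  ~ lt x v -> ~ lt v x -> intersects L Rt x v.
Proof.
move=> [hl hr] h1 h2.
have a1 : ~ (Rt x < L v)%R by move=> /hr.
have a2 : ~ (Rt v < L x)%R by move=> /hr.
have := hl x; have := hl v => b1 b2.
rewrite /intersects /in_I.
destruct (Rle_dec (L x) (L v)).
- exists (L v); lra.
- exists (L x); lra.
Qed.

Lemma nointer (X : Type) (lt : X -> X -> Prop) L Rt x u : interval_rep lt L Rt ->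
  lt x u -> ~ intersects L Rt x u /\ ~ intersects L Rt u x.
Proof.
move=> [hl hr] /hr h; rewrite /intersects /in_I; split; move=> [t ht]; lra.
Qed.

Theorem theorem11 (X : finType) (lt : X -> X -> Prop) :
  strict_poset lt -> twin_free lt -> interval_order lt ->
  exists L Rt : X -> R,
    interval_rep lt L Rt /\
    (forall u v : X, strict_sub L Rt u v ->
       (exists x, peeks_left L Rt x v u) /\ (exists y, peeks_right L Rt y v u)).
Proof.
move=> hp _ [L1 [R1 hr1]].
set M := #|X|.+1.
pose Ln x := (2*M*Dn lt x + R0 lt x)%N.
pose Rn x := (2*M*R0 lt x + M + Dn lt x)%N.
have repn : forall x y, lt x y <-> (Rn x < Ln y)%N.
  move=> x y; rewrite (rep0 hr1); apply: arith1; [exact: D0bound | exact: R0bound].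
have LRn : forall x, (Ln x <= Rn x)%N.
  move=> x; apply: arith2; [exact: R0bound | exact: L0R0].
exists (fun x => INR (Ln x)), (fun x => INR (Rn x)).
have hrep : interval_rep lt (fun x => INR (Ln x)) (fun x => INR (Rn x)).
  split; first by move=> x; apply: le_INR; apply/leP.
  move=> x y; rewrite repn; split => h.
  - by apply: lt_INR; apply/ltP.
  - by apply/ltP; apply: INR_lt.
split => // u v [hs [t [ht1 ht2]]].
have hu1 := LRn u.
have hLvu : (Ln v <= Ln u)%N.
  apply/leP; apply: INR_le; have := hs (INR (Ln u)); rewrite /in_I => h.
  have : (INR (Ln u) <= INR (Rn u))%R by apply: le_INR; apply/leP.
  move=> hh; have := h (conj (Rle_refl _) hh); lra.
have hRuv : (Rn u <= Rn v)%N.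
  apply/leP; apply: INR_le; have := hs (INR (Rn u)); rewrite /in_I => h.
  have : (INR (Ln u) <= INR (Rn u))%R by apply: le_INR; apply/leP.
  move=> hh; have := h (conj hh (Rle_refl _)); lra.
have hne : ~ (Ln v = Ln u /\ Rn u = Rn v).
  move=> [e1 e2]; apply: ht2; move: ht1; rewrite /in_I e1 e2 //.
have bu := D0bound lt u; have bv := D0bound lt v.
have cu := R0bound lt u; have cv := R0bound lt v.
have [a1 a2] := arithA cv cu hLvu.
have hR' : 2*M*R0 lt u + Dn lt u <= 2*M*R0 lt v + Dn lt v.
  move: hRuv; rewrite /Rn; lia.
have [b1 b2] := arithA bu bv hR'.
have sL : (Dn lt v < Dn lt u)%N.
  rewrite ltn_neqAle a1 andbT; apply/eqP => e.
  have e2 : R0 lt v = R0 lt u by apply/eqP; rewrite eqn_leq a2 // b1.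
  by apply: hne; rewrite /Ln /Rn e e2.
have sR : (R0 lt u < R0 lt v)%N.
  rewrite ltn_neqAle b1 andbT; apply/eqP => e.
  have e2 : Dn lt v = Dn lt u by apply/eqP; rewrite eqn_leq a1 // b2.
  by apply: hne; rewrite /Ln /Rn e e2.
have [_ trans] := hp.
split.
- have [x [hxu hxv]] := left_ex sL.
  exists x; split; last by have := (proj2 hrep x u); move=> [h _]; apply: Rlt_le; apply: h.
  split; last by case: (nointer hrep hxu).
  apply: inter_of hrep hxv _ => hvx.
  have := trans _ _ _ hvx hxu; rewrite repn; lia.
- have [y [huy hvy]] := right_ex sR.
  exists y; split; last by have := (proj2 hrep u y); move=> [h _]; apply: Rlt_le; apply: h.
  split; last first.
    move=> [t0 [h1 h2]]; case: (nointer hrep huy) => _ hh; apply: hh; by exists t0.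
  apply: inter_of hrep _ hvy => hyv.
  have := trans _ _ _ huy hyv; rewrite repn; lia.
Qed.
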